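(* Assume the vertex degrees of $G$ are uniformly bounded, let $\theta\in(0,1)$, and let $\rho=\lim_nR_n^{1/n}$. For every $\varepsilon>0$ there is $N$ such that for all $n\ge N$ and all $f\in\mathrm{Lip}_\theta$: $$\|\mathcal T^nf-\mathcal T^n\Pi_nf\|_\infty\le(\rho+\varepsilon)^n\theta^n\,\mathrm L_1(f),\qquad \|\mathcal T^nf-\mathcal T^n\Pi_nf\|_\theta\le(\rho+\varepsilon)^n\theta^n\,\mathrm L_1(f).$$
   Context: $G$ is a connected, locally finite graph (no loops, no multiple edges, every vertex of degree $\ge2$). $E$ oriented edges with $\iota,\tau$, opposite $\bar e$; turn $e\rightsquigarrow e'$ iff $\tau(e)=\iota(e')$, $e'\ne\bar e$. $P$ = infinite paths $(e_1,e_2,\dots)$ with $e_i\rightsquigarrow e_{i+1}$; $(\mathcal Tf)(e_1,\dots)=\sum_{e_0\rightsquigarrow e_1}f(e_0,e_1,\dots)$. $R_n=\sup_{e}\#\{(e_{-n},\dots,e_0): e_i\rightsquigarrow e_{i+1},\ e_0=e\}$. A postal code of length $m$ is a finite path $c=(c_1,\dots,c_m)$ with $c_i\rightsquigarrow c_{i+1}$; its district $P_c$ is the set of $p\in P$ beginning with $c$. For each $m$ and each postal code $c$ of length $m$ a point $p_c\in P_c$ is fixed, and $\Pi_m f$ is the function with $(\Pi_mf)(p)=f(p_c)$, $c$ the length-$m$ prefix of $p$. $d_\theta(p,p')=\theta^{k-1}$, $k=\min\{i:e_i\ne e'_i\}$; $\mathrm{Lip}_\theta$ = bounded $f$ uniformly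 $d_\theta$-Lipschitz on islands $\{p:\iota(e_1)=v\}$; $\mathrm L_1(f)$ = optimal Lipschitz constant over pairs with the same first edge; $\|f\|_\theta=\mathrm L_1(f)+\|f\|_\infty$. *)

(* Defs.v *)
From HB Require Import structures.
From mathcomp Require Import all_boot all_order all_algebra.
From mathcomp Require Import all_classical all_reals all_analysis.
Set Implicit Arguments. Unset Strict Implicit. Unset Printing Implicit Defensive.
Import Order.TTheory GRing.Theory Num.Theory.
Local Open Scope classical_set_scope.
Local Open Scope ring_scope.

Section Defs.
Variables (R : realType) (V : eqType) (nbrs : V -> seq V).

Definition isEdge (e : V * V) : bool := e.2 \in nbrs e.1.
Definition iota_ (e : V * V) : V := e.1.
Definition tau_ (e : V * V) : V := e.2.
Definition rev_edge (e : V * V) : V * V := (e.2, e.1).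

Definition turn (e e' : V * V) : bool :=
  [&& isEdge e, isEdge e', tau_ e == iota_ e' & e' != rev_edge e].

(* infinite paths (e_1, e_2, ...) are indexed from 0: p 0 = e_1 *)
Definition seqE := nat -> V * V.
Definition Paths : set seqE := [set p | forall i, turn (p i) (p i.+1)].

Definition postal (c : seq (V * V)) : bool :=
  if c is c1 :: cs then isEdge c1 && path turn c1 cs else true.

Definition code_prefix (m : nat) (p : seqE) : seq (V * V) := mkseq p m.

Definition scons (e : V * V) (p : seqE) : seqE :=
  fun i => if i is k.+1 then p k else e.

(* transfer operator: (T f)(e_1,...) = sum_{e_0 ~> e_1} f(e_0,e_1,...);
   the edges e_0 with e_0 ~> e_1 are the (u, iota e_1), u neighbour of
   iota e_1, u <> tau e_1. *)
Definition transfer (f : seqE -> R) : seqE -> R :=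
  fun p => \sum_(u <- nbrs (iota_ (p 0)) | u != tau_ (p 0))
             f (scons (u, iota_ (p 0)) p).

(* Pi_m f, given the chosen representatives pc c of the districts P_c *)
Definition Pi (pc : seq (V * V) -> seqE) (m : nat) (f : seqE -> R) : seqE -> R :=
  fun p => f (pc (code_prefix m p)).

(* number of (e_{-n},...,e_0) with e_i ~> e_{i+1} and e_0 = e *)
Fixpoint nback (n : nat) (e : V * V) : nat :=
  if n is k.+1 then
    \sum_(u <- nbrs (iota_ e) | u != tau_ e) nback k (u, iota_ e)
  else 1.

Definition Rn (n : nat) : R :=
  sup [set (nback n e)%:R | e in [set e | isEdge e]].

(* d_theta(p,p') = theta^(k-1), k the first (1-based) index where they differ *)
Definition dtheta (theta : R) (p q : seqE) : R :=
  match pselect (exists k, p k != q k) with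
  | left H => theta ^+ ex_minn H
  | right _ => 0
  end.

Definition Lip (theta : R) (f : seqE -> R) : Prop :=
  (exists M : R, forall p, Paths p -> `|f p| <= M) /\
  (exists L : R, forall p q, Paths p -> Paths q -> iota_ (p 0) = iota_ (q 0) ->
     `|f p - f q| <= L * dtheta theta p q).

(* sup norm (over P) and optimal Lipschitz constant over pairs with the same
   first edge, as extended reals (+oo if no finite bound exists) *)
Definition normInf (f : seqE -> R) : \bar R :=
  ereal_inf [set M%:E | M in [set M : R | 0 <= M /\
     forall p, Paths p -> `|f p| <= M]].

Definition L1 (theta : R) (f : seqE -> R) : \bar R :=
  ereal_inf [set L%:E | L in [set L : R | 0 <= L /\
     forall p q, Paths p -> Paths q -> p 0 = q 0 ->
       `|f p - f q| <= L * dtheta theta p q]].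

Definition normTheta (theta : R) (f : seqE -> R) : \bar R :=
  (L1 theta f + normInf f)%E.

End Defs.

(* Main.v *)
Set Warnings "-all".
Require Import Defs.
From HB Require Import structures.
From mathcomp Require Import all_boot all_order all_algebra.
From mathcomp Require Import all_classical all_reals all_analysis.
Import Order.TTheory GRing.Theory Num.Theory numFieldNormedType.Exports.
Local Open Scope classical_set_scope.
Local Open Scope ring_scope.
From mathcomp Require Import lra ring.

Lemma scons_path (V : eqType) (nbrs : V -> seq V)
  (Hsym : forall u v, (u \in nbrs v) = (v \in nbrs u)) (p : seqE V) u :
  Paths nbrs p -> u \in nbrs (iota_ (p 0%N)) -> u != tau_ (p 0%N) ->
  Paths nbrs (scons (u, iota_ (p 0%N)) p).
Proof.
move=> Hp Hu Hut [|i] /=; last exact: Hp i.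
have := Hp 0%N; case/andP => E0 _; move: E0 Hu Hut.
rewrite /turn /isEdge /iota_ /tau_ /=.
case: (p 0%N) => x y /= E0 Hu Hut.
rewrite -Hsym Hu E0 eqxx /=.
by rewrite /rev_edge /= xpair_eqE negb_and eq_sym Hut orbT.
Qed.

Lemma iter_diff (R : realType) (V : eqType) (nbrs : V -> seq V)
  (Hsym : forall u v, (u \in nbrs v) = (v \in nbrs u)) (n : nat) :
  forall (h1 h2 : seqE V -> R) (B : R) (p q : seqE V),
  Paths nbrs p -> Paths nbrs q -> p 0%N = q 0%N ->
  (forall p' q', Paths nbrs p' -> Paths nbrs q' ->
     (forall i, (i < n)%N -> p' i = q' i) ->
     (forall i, p' (n + i)%N = p i /\ q' (n + i)%N = q i) ->
     `|h1 p' - h2 q'| <= B) ->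
  `|iter n (transfer nbrs) h1 p - iter n (transfer nbrs) h2 q|
    <= (nback nbrs n (p 0%N))%:R * B.
Proof.
elim: n => [|n IH] h1 h2 B p q Hp Hq Hpq H.
  rewrite /= mul1r; apply: H => // i; by rewrite add0n.
rewrite !iterS /transfer -Hpq -sumrB /= natr_sum mulr_suml.
apply: (le_trans (ler_norm_sum _ _ _)).
rewrite big_seq_cond [X in _ <= X]big_seq_cond.
apply: ler_sum => u /andP[Hu' Hu].
apply: IH.
- exact: scons_path.
- rewrite Hpq; apply: scons_path => //; by rewrite -Hpq.
- by [].
move=> p' q' Hp' Hq' Hlt Hsh; apply: H => //.
  move=> i; rewrite ltnS leq_eqVlt => /orP[/eqP ->|]; last exact: Hlt.
  have [e1 e2] := Hsh 0%N; rewrite addn0 /= in e1 e2; by rewrite e1 e2.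
move=> i; have := Hsh i.+1; by rewrite addnS addSn.
Qed.

Lemma dtheta_ge0 (R : realType) (V : eqType) (theta : R) (p q : seqE V) :
  0 <= theta -> 0 <= dtheta theta p q.
Proof. by move=> t0; rewrite /dtheta; case: pselect => // H; exact: exprn_ge0. Qed.

Lemma dtheta_agree (R : realType) (V : eqType) (theta : R) (p q : seqE V) n :
  0 <= theta <= 1 -> (forall i, (i < n)%N -> p i = q i) -> dtheta theta p q <= theta ^+ n.
Proof.
move=> /andP[t0 t1] Hag; rewrite /dtheta; case: pselect => [H|_]; last exact: exprn_ge0.
case: ex_minnP => m Hm _; apply: ler_wiXn2l => //.
rewrite leqNgt; apply/negP => mn; by rewrite Hag ?eqxx in Hm.
Qed.

Lemma dtheta_shift (R : realType) (V : eqType) (theta : R) (p q p' q' : seqE V) n :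
  0 <= theta <= 1 -> (forall i, (i < n)%N -> p' i = q' i) ->
  (forall i, p' (n + i)%N = p i /\ q' (n + i)%N = q i) ->
  dtheta theta p' q' <= theta ^+ n * dtheta theta p q.
Proof.
move=> /andP[t0 t1] Hag Hsh; rewrite {1}/dtheta; case: pselect => [H|_]; last first.
  by rewrite mulr_ge0 ?exprn_ge0 ?dtheta_ge0.
case: ex_minnP => m Hm _.
have nm : (n <= m)%N.
  rewrite leqNgt; apply/negP => mn; by rewrite Hag ?eqxx in Hm.
have Hk : p (m - n)%N != q (m - n)%N.
  by have [<- <-] := Hsh (m - n)%N; rewrite subnKC.
rewrite /dtheta; case: pselect => [H2|H2]; last by exfalso; apply: H2; exists (m - n)%N.
case: ex_minnP => k _ Hmin.
rewrite -exprD; apply: ler_wiXn2l => //.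
by rewrite -(subnKC nm) leq_add2l; apply: Hmin.
Qed.

Lemma postal_prefix (V : eqType) (nbrs : V -> seq V) (p : seqE V) n :
  Paths nbrs p -> (0 < n)%N -> postal nbrs (code_prefix n p).
Proof.
move=> Hp; case: n => // n _.
have gen : forall k m, path (turn nbrs) (p k) (map p (iota k.+1 m)).
  move=> k m; elim: m k => // m IH k /=; by rewrite Hp IH.
rewrite /code_prefix /mkseq /=.
have := Hp 0%N => /andP[-> _] /=; exact: gen.
Qed.

Lemma le_mul_inf (R : realType) (x : \bar R) (c : R) (T : set R) : 0 < c ->
  (forall L, T L -> (x <= (c * L)%:E)%E) ->
  (x <= c%:E * ereal_inf [set L%:E | L in T])%E.
Proof.
move=> c0 H; rewrite -lee_pdivrMl //.
apply: le_ereal_inf_tmp => _ [L TL <-].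
by rewrite lee_pdivrMl // -EFinM; apply: H.
Qed.

Lemma sum_le_size (T : Type) (s : seq T) (P : pred T) (F : T -> nat) K :
  (forall u, (F u <= K)%N) -> (\sum_(u <- s | P u) F u <= size s * K)%N.
Proof.
move=> HF; elim: s => [|x s IH]; first by rewrite big_nil.
rewrite big_cons /= mulSn; case: (P x).
  by rewrite leq_add.
exact: leq_trans IH (leq_addl _ _).
Qed.

Lemma nback_bound (V : eqType) (nbrs : V -> seq V) D :
  (forall v, (size (nbrs v) <= D)%N) -> forall n e, (nback nbrs n e <= D ^ n)%N.
Proof.
move=> HD; elim=> [|n IH] e //=.
apply: (@leq_trans (\sum_(u <- nbrs (iota_ e) | u != tau_ e) nback nbrs n (u, iota_ e))%N); first exact: leqnn.
apply: leq_trans (sum_le_size _ (nbrs (iota_ e)) (fun u => u != tau_ e) (fun u => nback nbrs n (u, iota_ e)) (D ^ n) (fun u => IH _)) _.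
by rewrite expnS leq_mul2r HD orbT.
Qed.

Lemma nback_le_Rn (R : realType) (V : eqType) (nbrs : V -> seq V)
  (Hbdd : exists D : nat, forall v, (size (nbrs v) <= D)%N) n e :
  isEdge nbrs e -> (nback nbrs n e)%:R <= Rn R nbrs n.
Proof.
move=> He; case: Hbdd => D HD; rewrite /Rn; apply: sup_upper_bound; last by exists e.
split; first by exists (nback nbrs n e)%:R; exists e.
exists (D ^ n)%:R => _ [e' _ <-]; rewrite ler_nat; exact: nback_bound.
Qed.

Lemma Rn_ge0 (R : realType) (V : eqType) (nbrs : V -> seq V)
  (Hbdd : exists D : nat, forall v, (size (nbrs v) <= D)%N) n :
  0 <= Rn R nbrs n.
Proof.
case: (pselect (exists e, isEdge nbrs e)) => [[e He]|H].
  exact: le_trans (ler0n _ _) (@nback_le_Rn R V nbrs Hbdd n e He).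
rewrite /Rn (_ : [set _ | e in _] = set0) ?sup0 //.
apply/seteqP; split => x // [e He _]; apply: H; by exists e.
Qed.
Lemma rate (R : realType) (r : nat -> R) (rho eps : R) : 0 < eps ->
  (fun n : nat => powR (r n) (n%:R)^-1) @ \oo --> rho ->
  0 < rho + eps /\ exists N, forall n, (N <= n)%N -> 2 * r n <= (rho + eps) ^+ n.
Proof.
move=> He Hr.
set a := rho + eps / 2; set b := rho + eps.
have rha : rho < a by rewrite /a; lra.
have [N1 _ HN1] := cvgr_lt _ Hr a rha.
have a0 : 0 < a.
  have := HN1 N1 (leqnn _); rewrite /=; have := powR_ge0 (r N1) (N1%:R^-1); lra.
have b0 : 0 < b by rewrite /b; rewrite /a in a0; lra.
split => //.
have z1 : `|a / b| < 1.
  rewrite ger0_norm; last by rewrite divr_ge0 // ltW.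
  by rewrite ltr_pdivrMr // mul1r /a /b; lra.
have h12 : 0 < 1/2 :> R by lra.
have [N2 _ HN2] := cvgr_lt _ (cvg_expr z1) (1/2) h12.
exists (maxn 1 (maxn N1 N2)) => n; rewrite !geq_max => /and3P[n1 nN1 nN2].
have bn : 0 < b ^+ n by rewrite exprn_gt0.
have ran : r n <= a ^+ n \/ r n < 0.
  case: (lerP 0 (r n)) => r0; last by right.
  left.
  have -> : r n = (powR (r n) (n%:R)^-1) ^+ n.
    rewrite -powR_mulrn ?powR_ge0 // -powRrM mulVf ?powRr1 //.
    by rewrite pnatr_eq0 -lt0n.
  apply: lerXn2r; rewrite ?qualifE /= ?powR_ge0 ?ltW //.
  exact: (HN1 n nN1).
have hz := HN2 n nN2; rewrite /= in hz.
have e : a ^+ n = (a / b) ^+ n * b ^+ n by rewrite expr_div_n divfK // gt_eqF.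
have z0 : 0 <= (a / b) ^+ n by rewrite exprn_ge0 // divr_ge0 // ltW.
case: ran => ran; last by lra.
rewrite e in ran.
nra.
Qed.

Theorem mainTheorem7 (R : realType) (V : eqType) (nbrs : V -> seq V)
  (Huniq : forall v, uniq (nbrs v))
  (Hsym : forall u v, (u \in nbrs v) = (v \in nbrs u))
  (Hirr : forall v, v \notin nbrs v)
  (Hconn : forall u v, exists s, path (fun x y => y \in nbrs x) u s /\ last u s = v)
  (Hdeg2 : forall v, (2 <= size (nbrs v))%N)
  (Hbdd : exists D : nat, forall v, (size (nbrs v) <= D)%N)
  (theta : R) (Htheta : 0 < theta < 1)
  (rho : R)
  (Hrho : (fun n : nat => powR (Rn R nbrs n) (n%:R)^-1) @ \oo --> rho)
  (pc : seq (V * V) -> seqE V)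
  (Hpc : forall c, (0 < size c)%N -> postal nbrs c ->
           Paths nbrs (pc c) /\ code_prefix (size c) (pc c) = c) :
  forall eps : R, 0 < eps -> exists N : nat, forall n : nat, (N <= n)%N ->
    forall f : seqE V -> R, Lip nbrs theta f ->
      let g := fun p => iter n (transfer nbrs) f p
                        - iter n (transfer nbrs) (Pi pc n f) p in
      (normInf nbrs g <= ((rho + eps) ^+ n * theta ^+ n)%:E * L1 nbrs theta f)%E /\
      (normTheta nbrs theta g <= ((rho + eps) ^+ n * theta ^+ n)%:E * L1 nbrs theta f)%E.
Proof.
move=> eps e0.
have [bpos [N HN]] := @rate R _ rho eps e0 Hrho.
exists (maxn 1 N) => n; rewrite geq_max => /andP[n1 nN] f Hf g.
set c := (rho + eps) ^+ n * theta ^+ n.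
set c1 := Rn R nbrs n * theta ^+ n.
have t0 : 0 <= theta by case/andP: Htheta => /ltW.
have t01 : 0 <= theta <= 1 by case/andP: Htheta => /ltW -> /ltW.
have tn : 0 <= theta ^+ n by exact: exprn_ge0.
have Rn0 := @Rn_ge0 R V nbrs Hbdd n.
have c0 : 0 < c by rewrite /c mulr_gt0 ?exprn_gt0 //; case/andP: Htheta.
have c10 : 0 <= c1 by rewrite /c1 mulr_ge0.
have c1c : 2 * c1 <= c.
  by rewrite /c /c1 mulrA; apply: ler_wpM2r => //; exact: HN.
have pref : forall p' q' : seqE V, (forall i, (i < n)%N -> p' i = q' i) ->
    code_prefix n p' = code_prefix n q'.
  move=> p' q' Hag; rewrite /code_prefix /mkseq; apply/eq_in_map => i.
  by rewrite mem_iota add0n => /andP[_ Hi]; rewrite Hag.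
have nbR : forall p, Paths nbrs p -> (nback nbrs n (p 0%N))%:R <= Rn R nbrs n.
  move=> p Hp; apply: (@nback_le_Rn R V nbrs Hbdd n).
  by have := Hp 0%N => /andP[].
have key : forall L, 0 <= L /\ (forall p q, Paths nbrs p -> Paths nbrs q -> p 0%N = q 0%N ->
       `|f p - f q| <= L * dtheta theta p q) ->
    (normInf nbrs g <= (c1 * L)%:E)%E /\ (L1 nbrs theta g <= (c1 * L)%:E)%E.
  move=> L [L0 HL]; split.
    rewrite /normInf; apply: ereal_inf_lbound; exists (c1 * L) => //; split.
      exact: mulr_ge0.
    move=> p Hp; rewrite /g.
    have := @iter_diff R V nbrs Hsym n f (Pi pc n f) (theta ^+ n * L) p p Hp Hp erefl.
    move=> /(_ _) H; apply: le_trans (H _) _.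
      move=> p' q' Hp' Hq' Hag Hsh; rewrite /Pi -(pref _ _ Hag).
      set cc := code_prefix n p'.
      have scc : size cc = n by rewrite size_mkseq.
      have ccpos : (0 < size cc)%N by rewrite scc.
      have [Hpc1 Hpc2] := Hpc cc ccpos (@postal_prefix V nbrs p' n Hp' n1).
      rewrite scc in Hpc2.
      have ag : forall i, (i < n)%N -> p' i = pc cc i.
        move=> i Hi; have := congr1 (fun s => nth (p' 0%N) s i) Hpc2.
        by rewrite /cc /code_prefix !nth_mkseq.
      apply: le_trans (HL _ _ Hp' Hpc1 (ag 0%N n1)) _.
      rewrite [_ * L]mulrC; apply: ler_wpM2l => //; exact: dtheta_agree.
    rewrite /c1 -mulrA; apply: ler_wpM2r; [exact: mulr_ge0 | exact: nbR].
  rewrite /L1; apply: ereal_inf_lbound; exists (c1 * L) => //; split.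
    exact: mulr_ge0.
  move=> p q Hp Hq Hpq; rewrite /g.
  have A := @iter_diff R V nbrs Hsym n f f (theta ^+ n * L * dtheta theta p q) p q Hp Hq Hpq.
  have B := @iter_diff R V nbrs Hsym n (Pi pc n f) (Pi pc n f) 0 p q Hp Hq Hpq.
  have {}A : `|iter n (transfer nbrs) f p - iter n (transfer nbrs) f q| <=
      (nback nbrs n (p 0%N))%:R * (theta ^+ n * L * dtheta theta p q).
    apply: A => p' q' Hp' Hq' Hag Hsh.
    apply: le_trans (HL _ _ Hp' Hq' (Hag 0%N n1)) _.
    rewrite (mulrC _ L) -mulrA; apply: ler_wpM2l => //; exact: dtheta_shift.
  have {}B : `|iter n (transfer nbrs) (Pi pc n f) p - iter n (transfer nbrs) (Pi pc n f) q| <=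
      (nback nbrs n (p 0%N))%:R * 0.
    apply: B => p' q' Hp' Hq' Hag Hsh.
    by rewrite /Pi (pref _ _ Hag) subrr normr0.
  rewrite mulr0 in B.
  set a1 := iter n (transfer nbrs) f p; set a2 := iter n (transfer nbrs) f q.
  set b1 := iter n (transfer nbrs) (Pi pc n f) p; set b2 := iter n (transfer nbrs) (Pi pc n f) q.
  have -> : a1 - b1 - (a2 - b2) = (a1 - a2) - (b1 - b2) by ring.
  apply: le_trans (ler_normB _ _) _.
  apply: le_trans (lerD A B) _; rewrite addr0.
  have d0 := @dtheta_ge0 R V theta p q t0.
  rewrite /c1 -!mulrA; apply: ler_wpM2r; last exact: nbR.
  by rewrite mulrA; apply: mulr_ge0 => //; exact: mulr_ge0.
split.
  apply: le_mul_inf => // L TL; have [HI _] := key L TL.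
  apply: le_trans HI _; rewrite lee_fin; apply: ler_wpM2r; first by case: TL.
  lra.
apply: le_mul_inf => // L TL; have [HI HL] := key L TL.
rewrite /normTheta; apply: le_trans (leeD HL HI) _.
rewrite -EFinD lee_fin; case: TL => L0 _; nra.
Qed.
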